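(* Let $(X^t)_{t\ge1}$ be real random variables with $X^1>0$ deterministic, and let $a,t_0,C_1,C_2>0$ be constants with $a>1$ and $t_0\ge a$. Suppose that for every $t\ge1$, $$\mathbb E[\exp(X^{t+1})]\le\mathbb E\Big[\exp\Big(\Big(1-\frac{a}{t+t_0}\Big)X^t+\frac{C_1}{t+t_0}+\frac{C_2}{(t+t_0)^2}\Big)\Big].$$ Then for every $t\ge1$, $$\mathbb E[\exp(X^{t+1})]\le\exp\Big(\frac{(t_0+1)^aX^1}{(t+1+t_0)^a}+\frac{C_1}{a}+\frac{3C_2/(a-1)}{t+1+t_0}\Big).$$
   Context: All expectations are assumed to be finite (possibly $+\infty$ on the right-hand side of the hypothesis makes it vacuous). *)

(* Defs.v *)
From HB Require Import structures.
From mathcomp Require Import all_boot all_order all_algebra.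
From mathcomp Require Import all_classical all_reals all_analysis.

(* Main.v *)
Require Import Defs.
From HB Require Import structures.
From mathcomp Require Import all_boot all_order all_algebra.
From mathcomp Require Import all_classical all_reals all_analysis.
From mathcomp Require Import ring lra.
Import Order.TTheory GRing.Theory Num.Theory.
Local Open Scope ring_scope.

Section S.
Context (d : measure_display) (T : measurableType d) (R : realType) (P : probability T R).

Lemma conv_exp (lam x m : R) : 0 <= lam <= 1 ->
  expR (lam * x + (1 - lam) * m) <= lam * expR x + (1 - lam) * expR m.
Proof.
move=> /andP[l0 l1]; set z := lam * x + (1 - lam) * m.
have ex : expR x = expR z * expR (x - z) by rewrite -expRD; congr expR; ring.
have em : expR m = expR z * expR (m - z) by rewrite -expRD; congr expR; ring.
have h1 := expR_ge1Dx (x - z); have h2 := expR_ge1Dx (m - z).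
have ez : 0 < expR z := expR_gt0 z.
rewrite ex em.
have : lam * (1 + (x - z)) + (1 - lam) * (1 + (m - z)) = 1 by rewrite /z; ring.
move=> e1.
have a1 := ler_wpM2l l0 h1.
have l1' : 0 <= 1 - lam by rewrite subr_ge0.
have a2 := ler_wpM2l l1' h2.
have h := lerD a1 a2; rewrite e1 in h; rewrite mulrCA [X in _ + X]mulrCA -mulrDr.
by rewrite -{1}[expR z]mulr1; apply: ler_wpM2l => //; apply: ltW.
Qed.

Lemma key (Y : T -> R) (mY : measurable_fun setT Y)
  (iY : P.-integrable setT (fun w => (expR (Y w))%:E)) (lam c m : R) :
  0 <= lam <= 1 ->
  ('E_P[fun w => expR (Y w)] <= (expR m)%:E)%E ->
  ('E_P[fun w => expR (lam * Y w + c)] <= (expR (c + lam * m))%:E)%E.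
Proof.
move=> /andP[l0 l1] hE.
set k := expR (c - (1 - lam) * m).
have k0 : 0 < k := expR_gt0 _.
have kl : 0 <= k * lam by rewrite mulr_ge0 // ltW.
have k1 : 0 <= k * (1 - lam) by rewrite mulr_ge0 ?subr_ge0 // ltW.
have pt : forall w, expR (lam * Y w + c) <= expR (Y w) * (k * lam) + k * (1 - lam) * expR m.
  move=> w; have -> : lam * Y w + c = (c - (1 - lam) * m) + (lam * Y w + (1 - lam) * m) by ring.
  rewrite [expR (Y w) * _]mulrC expRD -mulrA -mulrA -mulrDr; apply: ler_wpM2l; first exact: ltW.
  by apply: conv_exp; rewrite l0 l1.
have mE : measurable_fun setT (fun w => expR (Y w)).
  by apply: measurableT_comp => //.
apply: (@le_trans _ _ ('E_P[((k * lam) \o* (fun w => expR (Y w)) \+ cst (k * (1 - lam) * expR m))%R])%E).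
  apply: expectation_le.
  - apply: measurableT_comp => //.
    apply: measurable_realfun.measurable_funD => //.
    by apply: measurable_realfun.measurable_funM => //.
  - apply: measurable_realfun.measurable_funD => //.
    by apply: measurable_realfun.measurable_funM => //.
  - by move=> w; exact: expR_ge0.
  - by move=> w /=; rewrite addr_ge0 // mulr_ge0 // expR_ge0.
  - by apply: aeW => w; exact: pt.
have iL : (fun w => expR (Y w)) \in Lfun P 1 by apply/Lfun1_integrable.
rewrite expectationD ?Lfun_cst //; last exact: Lfun_scale.
rewrite expectationZl // expectation_cst.
have -> : expR (c + lam * m) = k * lam * expR m + k * (1 - lam) * expR m.
  rewrite -mulrDl -mulrDr (_ : lam + (1 - lam) = 1); last by ring.
  by rewrite mulr1 /k -expRD; congr expR; ring.
rewrite EFinD; apply: leeD2r; rewrite (EFinM (k * lam)).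
by apply: lee_wpmul2l; rewrite ?lee_fin.
Qed.
End S.
Lemma pow_step (R : realType) (a s : R) : 0 < a -> a < s ->
  (1 - a / s) * (s + 1) `^ a <= s `^ a.
Proof.
move=> a0 as_.
have s0 : 0 < s by apply: lt_trans as_.
have u0 : 0 < s^-1 by rewrite invr_gt0.
have e1 : s + 1 = s * (1 + s^-1) by rewrite mulrDr mulr1 divff ?gt_eqF.
have h1 : (1 + s^-1) `^ a <= expR (a / s).
  rewrite /powR gt_eqF; last by rewrite addr_gt0.
  rewrite ler_expR mulrC [a / s]mulrC; apply: ler_wpM2r; first exact: ltW.
  by apply: le_ln1Dx; apply: lt_trans u0; rewrite ltrN10.
have h2 : 1 - a / s <= expR (- (a / s)) by have := expR_ge1Dx (- (a / s)); rewrite addrC.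
have h3 : expR (a / s) * expR (- (a / s)) = 1 by rewrite -expRD subrr expR0.
have p0 : 0 < s `^ a by apply: powR_gt0.
rewrite e1 powRM; [|exact: ltW|by rewrite ltW // addr_gt0].
have ha : 0 <= 1 - a / s by rewrite subr_ge0 ler_pdivrMr // mul1r ltW.
rewrite mulrCA -{2}[s `^ a]mulr1; apply: ler_wpM2l; first exact: ltW.
apply: le_trans (_ : (1 - a / s) * expR (a / s) <= 1).
  by apply: ler_wpM2l.
apply: le_trans (ler_wpM2r (expR_ge0 (a / s)) h2) _; by rewrite mulrC h3.
Qed.

Lemma real_step (R : realType) (B C1 C2 a s : R) : 0 <= B -> 1 < a -> a < s -> 1 <= s -> 0 < C1 -> 0 < C2 ->
  C1 / s + C2 / s ^+ 2 + (1 - a / s) * (B / s `^ a + C1 / a + (3 * C2 / (a - 1)) / s)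
  <= B / (s + 1) `^ a + C1 / a + (3 * C2 / (a - 1)) / (s + 1).
Proof.
move=> B0 a1 as_ s1 c10 c20.
have a0 : 0 < a by apply: lt_trans a1.
have s0 : 0 < s by apply: lt_trans as_.
have p0 : 0 < s `^ a by apply: powR_gt0.
have q0 : 0 < (s + 1) `^ a by apply: powR_gt0; rewrite addr_gt0.
have hi : (1 - a / s) * (B / s `^ a) <= B / (s + 1) `^ a.
  rewrite -subr_ge0.
  have -> : B / (s + 1) `^ a - (1 - a / s) * (B / s `^ a)
     = B * (s `^ a - (1 - a / s) * (s + 1) `^ a) / (s `^ a * (s + 1) `^ a).
    by field; rewrite ?gt_eqF.
  apply: divr_ge0; last exact: ltW (mulr_gt0 p0 q0).
  by apply: mulr_ge0 => //; rewrite subr_ge0; exact: pow_step.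
have hii : (1 - a / s) * (C1 / a) + C1 / s = C1 / a by field; rewrite ?gt_eqF.
have hiii : (1 - a / s) * (3 * C2 / (a - 1) / s) + C2 / s ^+ 2 <= 3 * C2 / (a - 1) / (s + 1).
  rewrite -subr_ge0.
  have -> : 3 * C2 / (a - 1) / (s + 1) - ((1 - a / s) * (3 * C2 / (a - 1) / s) + C2 / s ^+ 2)
     = C2 * ((2 * s - 1) * (a - 1) + 3 * a) / ((a - 1) * s ^+ 2 * (s + 1)).
    by field; rewrite ?gt_eqF ?subr_gt0 ?addr_gt0.
  apply: divr_ge0.
    apply: mulr_ge0; first exact: ltW.
    by apply: addr_ge0; [apply: mulr_ge0; lra | lra].
  apply: mulr_ge0; last lra.
  by apply: mulr_ge0; [lra | exact: exprn_ge0 (ltW s0)].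
rewrite !mulrDr; lra.
Qed.

Theorem lemma8 (d : measure_display) (T : measurableType d) (R : realType)
  (P : probability T R) (X : nat -> {RV P >-> R})
  (x1 a t0 C1 C2 : R) :
  1 < a -> a <= t0 -> 0 < C1 -> 0 < C2 ->
  0 < x1 -> (forall w, X 1%N w = x1) ->
  (forall t : nat, (1 <= t)%N ->
     P.-integrable setT (fun w => (expR (X t w))%:E)) ->
  (forall t : nat, (1 <= t)%N ->
     ('E_P[fun w => expR (X t.+1 w)] <=
      'E_P[fun w => expR ((1 - a / (t%:R + t0)) * X t w
                          + C1 / (t%:R + t0) + C2 / (t%:R + t0) ^+ 2)])%E) ->
  forall t : nat, (1 <= t)%N ->
    ('E_P[fun w => expR (X t.+1 w)] <=
     (expR ((t0 + 1) `^ a * x1 / (t%:R + 1 + t0) `^ a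
            + C1 / a + (3 * C2 / (a - 1)) / (t%:R + 1 + t0)))%:E)%E.
Proof.
move=> a1 at0 c10 c20 x10 hX1 hint hstep.
set K := 3 * C2 / (a - 1).
set B := (t0 + 1) `^ a * x1.
pose A := fun s : R => B / s `^ a + C1 / a + K / s.
have a0 : 0 < a by apply: lt_trans a1.
have t00 : 0 < t0 by apply: lt_le_trans at0.
have B0 : 0 <= B by rewrite mulr_ge0 ?powR_ge0 // ltW.
have claim : forall n, (1 <= n)%N ->
    ('E_P[fun w => expR (X n w)] <= (expR (A (n%:R + t0)))%:E)%E.
  elim => [//|n IH] _.
  case: n IH => [_|n IH].
    rewrite (_ : (fun w => expR (X 1%N w)) = cst (expR x1)); last first.
      by apply: funext => w; rewrite hX1.
    rewrite expectation_cst lee_fin ler_expR /A.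
    have -> : 1%:R + t0 = t0 + 1 by rewrite addrC.
    have p0 : 0 < (t0 + 1) `^ a by rewrite powR_gt0 // addr_gt0.
    rewrite /B mulrAC divff ?gt_eqF // mul1r.
    have h1 : 0 < C1 / a by rewrite divr_gt0.
    have h2 : 0 < K / (t0 + 1) by rewrite divr_gt0 ?addr_gt0 // divr_gt0 ?mulr_gt0 // subr_gt0.
    lra.
  have IH' := IH isT.
  set s := n.+1%:R + t0 in IH' *.
  have s1 : 1 <= s by rewrite /s; have := ler0n R n.+1; lra.
  have as_ : a < s.
    have : 0 < n.+1%:R :> R by rewrite ltr0n.
    rewrite /s; lra.
  have lam01 : 0 <= 1 - a / s <= 1.
    have sp : 0 < s by lra.
    apply/andP; split; first by rewrite subr_ge0 ler_pdivrMr // mul1r ltW.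
    by rewrite lerBlDr lerDl divr_ge0 // ltW.
  have := hstep n.+1 isT; rewrite -/s.
  rewrite (_ : (fun w => expR ((1 - a / s) * X n.+1 w + C1 / s + C2 / s ^+ 2)) =
     (fun w => expR ((1 - a / s) * X n.+1 w + (C1 / s + C2 / s ^+ 2)))); last first.
    by apply: funext => w; rewrite addrA.
  move=> h1; apply: le_trans h1 _.
  have hk := @key _ _ _ P _ (measurable_funPT (X n.+1)) (hint n.+1 isT) (1 - a / s) (C1 / s + C2 / s ^+ 2) _ lam01 IH'.
  apply: le_trans hk _.
  rewrite lee_fin ler_expR.
  have -> : n.+2%:R + t0 = s + 1 by rewrite /s -[n.+2]addn1 natrD; ring.
  exact: real_step.
move=> t t1.
have e : t.+1%:R + t0 = t%:R + 1 + t0 by rewrite -addn1 natrD.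
by have := claim t.+1 isT; rewrite e.
Qed.
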